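(* Let $U>0$, $\mu\in\mathbb{R}$, $T\ge0$ and let $(\gamma,\alpha,\rho_0)$ be a minimizer of $\mathcal{F}$ over $\mathcal{D}$. Then $\alpha\equiv0$ if and only if $\rho_0=0$. If $\rho_0>0$, then $\alpha<0$ almost everywhere and $\|\alpha\|_{L^1(\mathbb{T}^3)}<\rho_0$.
   Context: Let $\mathbb{T}^3=[-\pi,\pi]^3$ with periodic identification and normalized Haar measure $dp$. Let $\varepsilon(p)=4\sum_{k=1}^3\sin^2(p_k/2)$. $\mathcal{D}=\{(\gamma,\alpha,\rho_0): \gamma\in L^1(\mathbb{T}^3),\ \gamma\ge0,\ \alpha^2\le\gamma(1+\gamma)\text{ a.e.},\ \rho_0\ge0\}$. With $\beta=\sqrt{(\tfrac12+\gamma)^2-\alpha^2}$, $S(\gamma,\alpha)=\int\big[(\beta+\tfrac12)\ln(\beta+\tfrac12)-(\beta-\tfrac12)\ln(\beta-\tfrac12)\big]dp$, and $\mathcal{F}(\gamma,\alpha,\rho_0)=\int(\varepsilon-\mu)\gamma\,dp-\mu\rho_0-TS(\gamma,\alpha)+\frac U2(\int\alpha)^2+U(\int\gamma)^2+U\rho_0\int\alpha+2U\rho_0\int\gamma+\frac U2\rho_0^2$ (integrals over $\mathbb{T}^3$; entropy term absent at $T=0$). A minimizer is a point of $\mathcal{D}$ attaining $\inf_{\mathcal{D}}\mathcal{F}$. *)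

(* Defs.v *)
From HB Require Import structures.
From mathcomp Require Import all_boot all_order all_algebra.
From mathcomp Require Import all_classical all_reals all_analysis.
Set Implicit Arguments. Unset Strict Implicit. Unset Printing Implicit Defensive.
Import Order.TTheory GRing.Theory Num.Theory.
Import numFieldNormedType.Exports.
Local Open Scope classical_set_scope.
Local Open Scope ring_scope.

Section Torus.
Variable R : realType.

Definition pt := ((R * R) * R)%type.

Definition leb3 := ((@lebesgue_measure R \x @lebesgue_measure R) \x @lebesgue_measure R)%E.

(* the fundamental cell [-pi,pi]^3 of the torus *)
Definition torus : set pt :=
  ((`[- pi, pi]%classic `*` `[- pi, pi]%classic) `*` `[- pi, pi]%classic).

(* integral over T^3 w.r.t. normalized Haar measure dp = dp/(2 pi)^3 *)
Definition tint (f : pt -> R) : R :=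
  (Rintegral leb3 torus f) / (2 * pi) ^+ 3.

Definition ae_torus (P : pt -> Prop) : Prop :=
  {ae leb3, forall p, torus p -> P p}.

Definition disp (p : pt) : R :=
  4 * ((sin (p.1.1 / 2)) ^+ 2 + (sin (p.1.2 / 2)) ^+ 2 + (sin (p.2 / 2)) ^+ 2).

Definition xlnx (x : R) : R := if x == 0 then 0 else x * ln x.

Definition betaf (g a : pt -> R) (p : pt) : R :=
  Num.sqrt ((2^-1 + g p) ^+ 2 - (a p) ^+ 2).

Definition entropy (g a : pt -> R) : R :=
  tint (fun p => xlnx (betaf g a p + 2^-1) - xlnx (betaf g a p - 2^-1)).

Definition domD (g a : pt -> R) (rho0 : R) : Prop :=
  measurable_fun torus g /\ leb3.-integrable torus (fun p => (g p)%:E) /\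
  measurable_fun torus a /\
  ae_torus (fun p => 0 <= g p) /\
  ae_torus (fun p => (a p) ^+ 2 <= g p * (1 + g p)) /\
  0 <= rho0.

Definition Ffun (U mu T : R) (g a : pt -> R) (rho0 : R) : R :=
  tint (fun p => (disp p - mu) * g p) - mu * rho0 - T * entropy g a
  + U / 2 * (tint a) ^+ 2 + U * (tint g) ^+ 2 + U * rho0 * tint a
  + 2 * U * rho0 * tint g + U / 2 * rho0 ^+ 2.

Definition is_minimizer (U mu T : R) (g a : pt -> R) (rho0 : R) : Prop :=
  domD g a rho0 /\
  forall g' a' rho0', domD g' a' rho0' -> Ffun U mu T g a rho0 <= Ffun U mu T g' a' rho0'.

End Torus.

(* Main.v *)
Require Import Defs.
From HB Require Import structures.
From mathcomp Require Import all_boot all_order all_algebra.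
From mathcomp Require Import all_classical all_reals all_analysis.
From mathcomp Require Import ring lra measurable_realfun.
Import Order.TTheory GRing.Theory Num.Theory.
Import numFieldNormedType.Exports.
Local Open Scope classical_set_scope.
Local Open Scope ring_scope.

Section S.
Set Implicit Arguments. Unset Strict Implicit.
Variable R : realType.
Local Notation mu := (@leb3 R).
Local Notation D := (@torus R).
Local Notation pt := (pt R).
Definition L1 := g_sigma_algebraType (R.-ocitv.-measurable).
Definition T3 := ((L1 * L1) * L1)%type.

Lemma mtorus : measurable (D : set T3).
Proof.
rewrite /torus. apply: measurableX; [apply: measurableX|]; exact: measurable_itv.
Qed.

Lemma leb_itv : @lebesgue_measure R (`[- pi, pi]%classic : set R) = (2 * pi : R)%:E.
Proof.
rewrite lebesgue_measure_itv /= ifT; last by rewrite lte_fin gtrN // pi_gt0.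
by rewrite -EFinB opprK -mulr2n mulr_natl.
Qed.

Definition c0 : R := (2 * pi) ^+ 3.

Lemma c0_gt0 : 0 < c0.
Proof. by rewrite /c0 exprn_gt0 // mulr_gt0 // pi_gt0. Qed.

Lemma mu_torus : mu D = c0%:E.
Proof.
rewrite /leb3 /torus product_measure1E; last 2 first.
- apply: measurableX; exact: measurable_itv.
- exact: measurable_itv.
rewrite [X in (X * _)%E]product_measure1E; try exact: measurable_itv.
transitivity ((2*pi)%:E * (2*pi)%:E * (2*pi)%:E : \bar R)%E.
  by congr (_ * _ * _)%E; apply: leb_itv.
by rewrite -!EFinM /c0 !exprS expr0 mulr1 mulrA.
Qed.

Definition integ (f : pt -> R) := mu.-integrable D (EFin \o f).

Lemma integ_cst r : integ (fun _ => r).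
Proof.
apply: measurable_bounded_integrable.
- exact: mtorus.
- by rewrite (_ : _ D = c0%:E) ?ltry //; exact: mu_torus.
- exact: measurable_cst.
- exists (`|r|); split; first exact: num_real.
  by move=> x xr y _; rewrite (le_trans _ (ltW xr)).
Qed.

Lemma integ_meas (f : pt -> R) : integ f -> measurable_fun (D : set T3) f.
Proof. by move=> /integrableP[/measurable_EFinP]. Qed.

Lemma integD f g : integ f -> integ g -> integ (fun p => f p + g p).
Proof. move=> hf hg; exact: (integrableD mtorus hf hg). Qed.

Lemma integN f : integ f -> integ (fun p => - f p).
Proof. move=> hf; exact: (integrableN hf). Qed.

Lemma integB f g : integ f -> integ g -> integ (fun p => f p - g p).
Proof. by move=> hf hg; apply: integD => //; apply: integN. Qed.

Lemma integZ k f : integ f -> integ (fun p => k * f p).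
Proof. move=> hf; exact: (integrableZl mtorus k hf). Qed.

Definition ae_torus' := @ae_torus R.

Lemma aeT (P : pt -> Prop) : (forall p, D p -> P p) -> ae_torus P.
Proof. by move=> h; apply: aeW. Qed.

Lemma aeF : Filter (almost_everywhere mu).
Proof. exact: ae_filter_ringOfSetsType. Qed.

Lemma ae_mp (P Q : pt -> Prop) : ae_torus P -> ae_torus (fun p => P p -> Q p) -> ae_torus Q.
Proof.
move=> hP hPQ; apply: (filterS2 aeF _ hP hPQ) => p h1 h2 Dp; exact: h2 Dp (h1 Dp).
Qed.

Lemma ae_and (P Q : pt -> Prop) : ae_torus P -> ae_torus Q -> ae_torus (fun p => P p /\ Q p).
Proof.
move=> hP hQ; apply: (filterS2 aeF _ hP hQ) => p h1 h2 Dp; split; [exact: h1|exact: h2].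
Qed.

Lemma ae_imp (P Q : pt -> Prop) : ae_torus P -> (forall p, D p -> P p -> Q p) -> ae_torus Q.
Proof.
move=> hP h; apply: (ae_mp hP); apply: aeT => p Dp; exact: h.
Qed.

Lemma integ_le (f g : pt -> R) : measurable_fun (D : set T3) f -> integ g -> ae_torus (fun p => `|f p| <= g p) -> integ f.
Proof.
move=> mf /integrableP[mg gfin] hle; apply/integrableP; split.
  exact/measurable_EFinP.
apply: le_lt_trans gfin.
apply: ae_ge0_le_integral => //.
- exact: mtorus.
- by apply: measurableT_comp => //; apply/measurable_EFinP.
- by apply: measurableT_comp.
- have H : ae_torus (fun p => (`|(f p)%:E| <= `|(g p)%:E|)%E).
    apply: (ae_imp hle) => p Dp h; rewrite lee_fin (ger0_norm (x := g p)) //.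
    exact: le_trans h.
  exact: H.
Qed.


Lemma tint_cst r : tint (fun _ : pt => r) = r.
Proof.
rewrite /tint.
rewrite (Rintegral_cst _ mtorus).
rewrite (_ : fine (mu D) = c0); last by rewrite (_ : _ D = c0%:E) //; exact: mu_torus.
by rewrite -[RHS]mulr1 -mulrA divff // gt_eqF // c0_gt0.
Qed.

Lemma tintD (f g : pt -> R) : integ f -> integ g -> tint (fun p => f p + g p) = tint f + tint g.
Proof.
move=> hf hg; rewrite /tint -mulrDl; congr (_ / _).
exact: (RintegralD mtorus hf hg).
Qed.

Lemma tintN (f : pt -> R) : integ f -> tint (fun p => - f p) = - tint f.
Proof.
move=> hf; rewrite /tint -mulNr; congr (_ / _).
rewrite -mulN1r -(RintegralZl _ mtorus hf).
by apply: eq_Rintegral => x _; rewrite mulN1r.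
Qed.

Lemma tintB (f g : pt -> R) : integ f -> integ g -> tint (fun p => f p - g p) = tint f - tint g.
Proof. by move=> hf hg; rewrite tintD ?tintN //; apply: integN. Qed.

Lemma tintZ k (f : pt -> R) : integ f -> tint (fun p => k * f p) = k * tint f.
Proof.
move=> hf; rewrite /tint mulrA; congr (_ / _).
exact: (RintegralZl _ mtorus hf).
Qed.

Lemma int_abs_eq (f : pt -> R) : integ f -> ae_torus (fun p => 0 <= f p) ->
  (\int[mu]_(x in D) (f x)%:E = \int[mu]_(x in D) `|(f x)%:E|)%E.
Proof.
move=> hf h0.
apply: (@ae_eq_integral _ T3 R mu D (fun x => `|(f x)%:E|%E)).
- exact: mtorus.
- apply/measurable_EFinP; exact: integ_meas hf.
- apply: measurableT_comp => //; apply/measurable_EFinP; exact: integ_meas hf.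
- have H : ae_torus (fun p => (f p)%:E = `|(f p)%:E|%E).
    by apply: (ae_imp h0) => p Dp h; rewrite gee0_abs // lee_fin.
  exact: H.
Qed.

Lemma tint_ge0 (f : pt -> R) : integ f -> ae_torus (fun p => 0 <= f p) -> 0 <= tint f.
Proof.
move=> hf h0; rewrite /tint divr_ge0 ?(ltW c0_gt0) //.
rewrite /Rintegral (int_abs_eq hf h0) fine_ge0 // integral_ge0 //.
Qed.

Lemma tint_le (f g : pt -> R) : integ f -> integ g -> ae_torus (fun p => f p <= g p) ->
  tint f <= tint g.
Proof.
move=> hf hg h; rewrite -subr_ge0 -tintB //.
apply: tint_ge0; first exact: integB.
by apply: (ae_imp h) => p _; rewrite subr_ge0.
Qed.

Lemma tint_eq0 (f : pt -> R) : integ f -> ae_torus (fun p => 0 <= f p) -> tint f <= 0 ->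
  ae_torus (fun p => f p = 0).
Proof.
move=> hf h0 hle.
have t0 : tint f = 0 by apply/le_anti; rewrite hle tint_ge0.
have r0 : Rintegral mu D f = 0.
  move: t0; rewrite /tint => /eqP; rewrite mulf_eq0 invr_eq0 (gt_eqF c0_gt0) orbF.
  by move/eqP.
have i0 : (\int[mu]_(x in D) (f x)%:E = 0)%E.
  rewrite -[LHS]fineK; first by rewrite -/(Rintegral mu D f) r0.
  exact: (integrable_fin_num mtorus hf).
have mf : measurable_fun (D : set T3) (EFin \o f).
  by apply/measurable_EFinP; exact: integ_meas hf.
have H : ae_eq mu D (EFin \o f) (cst 0%E).
  apply/(ae_eq_integral_abs _ mtorus mf).
  transitivity (\int[mu]_(x in D) (f x)%:E)%E; last exact: i0.
  by rewrite (int_abs_eq hf h0).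
have H' : ae_torus (fun p => (f p)%:E = 0%E) := H.
by apply: (ae_imp H') => p Dp [].
Qed.


Lemma mfst1 : measurable_fun (D : set T3) (fun p : pt => p.1.1).
Proof.
have h1 : measurable_fun [set: T3] (fun p : T3 => p.1) := measurable_fst.
have h2 : measurable_fun [set: L1 * L1] (fun p : L1 * L1 => p.1) := measurable_fst.
apply: (measurable_funS _ (@subsetT _ _)) => //.
exact: (measurableT_comp h2 h1).
Qed.

Lemma mfst2 : measurable_fun (D : set T3) (fun p : pt => p.1.2).
Proof.
have h1 : measurable_fun [set: T3] (fun p : T3 => p.1) := measurable_fst.
have h2 : measurable_fun [set: L1 * L1] (fun p : L1 * L1 => p.2) := measurable_snd.
apply: (measurable_funS _ (@subsetT _ _)) => //.
exact: (measurableT_comp h2 h1).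
Qed.

Lemma msnd : measurable_fun (D : set T3) (fun p : pt => p.2).
Proof.
have h1 : measurable_fun [set: T3] (fun p : T3 => p.2) := measurable_snd.
by apply: (measurable_funS _ (@subsetT _ _)).
Qed.

Lemma msinhalf (h : pt -> R) : measurable_fun (D : set T3) h ->
  measurable_fun (D : set T3) (fun p => sin (h p / 2) ^+ 2).
Proof.
move=> mh; apply: measurable_funX.
apply: (measurableT_comp (continuous_measurable_fun (@continuous_sin R))).
exact: measurable_funM mh (measurable_cst _).
Qed.

Lemma mdisp : measurable_fun (D : set T3) (@disp R).
Proof.
rewrite /disp; apply: measurable_funM; first exact: measurable_cst.
apply: measurable_funD; first apply: measurable_funD.
- exact: msinhalf mfst1.
- exact: msinhalf mfst2.
- exact: msinhalf msnd.
Qed.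

Lemma disp_bnd p : 0 <= @disp R p <= 12.
Proof.
rewrite /disp.
have hs (x : R) : 0 <= sin x ^+ 2 <= 1.
  rewrite sqr_ge0 /= sin2cos2 lerBlDr lerDl; exact: sqr_ge0.
have := hs (p.1.1 / 2); have := hs (p.1.2 / 2); have := hs (p.2 / 2).
move=> /andP[? ?] /andP[? ?] /andP[? ?]; apply/andP; split; lra.
Qed.


Lemma integ_abs (f : pt -> R) : integ f -> integ (fun p => `|f p|).
Proof. move=> hf; exact: (integrable_norm hf). Qed.

Lemma integ_mulb (h f : pt -> R) M : measurable_fun (D : set T3) h ->
  (forall p, `|h p| <= M) -> integ f -> integ (fun p => h p * f p).
Proof.
move=> mh hM hf; apply: (integ_le (g := fun p => M * `|f p|)).
- exact: measurable_funM mh (integ_meas hf).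
- exact/integZ/integ_abs.
- by apply: aeT => p _; rewrite normrM ler_wpM2r.
Qed.

End S.

Section P.
Set Implicit Arguments. Unset Strict Implicit.
Variable R : realType.
Local Notation mu := (@leb3 R).
Local Notation D := (@torus R).
Local Notation pt := (pt R).
Local Notation T3 := (T3 R).

Lemma msqrt (f : pt -> R) : measurable_fun (D : set T3) f ->
  measurable_fun (D : set T3) (fun p => Num.sqrt (f p)).
Proof.
move=> mf; exact: (measurableT_comp (continuous_measurable_fun (@sqrt_continuous R)) mf).
Qed.

Lemma dom_facts (g a : pt -> R) rho0 : domD g a rho0 ->
  [/\ measurable_fun (D : set T3) g, integ g, measurable_fun (D : set T3) a,
      ae_torus (fun p => [/\ 0 <= g p, 2^-1 <= betaf g a p,
          betaf g a p ^+ 2 = (2^-1 + g p) ^+ 2 - a p ^+ 2 &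
          `|a p| <= g p + 2^-1]) & 0 <= rho0].
Proof.
move=> [mg [ig [ma [hg0 [hc hr]]]]]; split => //.
apply: (ae_imp (ae_and hg0 hc)) => p _ [g0 c].
have hX : 4^-1 <= (2^-1 + g p) ^+ 2 - a p ^+ 2 by nra.
have hB2 : betaf g a p ^+ 2 = (2^-1 + g p) ^+ 2 - a p ^+ 2.
  by rewrite /betaf sqr_sqrtr //; apply: le_trans hX; rewrite invr_ge0.
have hB0 : 0 <= betaf g a p by rewrite /betaf sqrtr_ge0.
split => //.
- by nra.
- rewrite -(ger0_norm (x := g p + 2^-1)); last by lra.
  rewrite -ler_sqr ?normr_ge0 //.  
  by rewrite real_normK ?num_real //; rewrite real_normK ?num_real //; nra.
Qed.


Lemma sqrt_bnd (b x : R) : 0 <= b ->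
  b <= Num.sqrt (b ^+ 2 + x ^+ 2) <= b + `|x|.
Proof.
move=> b0; set s := Num.sqrt _.
have s0 : 0 <= s by rewrite sqrtr_ge0.
have s2 : s ^+ 2 = b ^+ 2 + x ^+ 2 by rewrite sqr_sqrtr // addr_ge0 ?sqr_ge0.
have x2 : `|x| ^+ 2 = x ^+ 2 by rewrite real_normK ?num_real.
have x0 : 0 <= `|x| by [].
apply/andP; split; nra.
Qed.

Lemma pert U mu0 T (g a : pt -> R) rho0 (hmin : is_minimizer U mu0 T g a rho0) (a' : pt -> R) :
  measurable_fun (D : set T3) a' -> integ a' ->
  let g' := fun p => Num.sqrt (betaf g a p ^+ 2 + a' p ^+ 2) - 2^-1 in
  0 <= rho0 - (tint g' - tint g) ->
  0 <= tint (fun p => disp p * (g' p - g p))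
       + U / 2 * ((tint a' + (rho0 - (tint g' - tint g))) ^+ 2 - (tint a + rho0) ^+ 2)
       - U * ((rho0 - (tint g' - tint g)) ^+ 2 - rho0 ^+ 2).
Proof.
move=> ma' ia' g' hr'.
case: hmin => hdom hopt.
have [mg ig ma hae hr0] := dom_facts hdom.
have mB : measurable_fun (D : set T3) (betaf g a).
  apply: msqrt; apply: measurable_funB; apply: measurable_funX => //.
  by apply: measurable_funD => //; exact: measurable_cst.
have mg' : measurable_fun (D : set T3) g'.
  apply: measurable_funB; last exact: measurable_cst.
  apply: msqrt; apply: measurable_funD; exact: measurable_funX.
have hg'ae : ae_torus (fun p => 0 <= g' p /\ g' p <= g p + `|a' p| + 2^-1).
  apply: (ae_imp hae) => p _ [g0 B1 B2 aB].
  have := sqrt_bnd (a' p) (le_trans _ B1); rewrite invr_ge0 ler0n => /(_ erefl).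
  rewrite /g' => /andP[h1 h2]; split; first by lra.
  have : betaf g a p <= g p + 2^-1.
    have b0 : 0 <= betaf g a p by rewrite /betaf sqrtr_ge0.
    have ha : 0 <= a p ^+ 2 by rewrite sqr_ge0.
    nra.
  lra.
have ig' : integ g'.
  apply: (integ_le (g := fun p => g p + `|a' p| + 1)) => //.
    apply: integD; last exact: integ_cst.
    by apply: integD => //; exact: integ_abs.
  apply: (ae_imp (ae_and hg'ae hae)) => p _ [[h1 h2] [g0 _ _ _]].
  rewrite ger0_norm //; lra.
have hbeta : betaf g' a' = betaf g a.
  apply: funext => p; rewrite /betaf /g' addrCA subrr addr0.
  rewrite sqr_sqrtr ?addrK ?sqrtr_sqr ?ger0_norm //.
    by rewrite sqrtr_ge0.
  by rewrite addr_ge0 // sqr_ge0.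
have hdom' : domD g' a' (rho0 - (tint g' - tint g)).
  split; first exact: mg'.
  split; first exact: ig'.
  split; first exact: ma'.
  split; first by apply: (ae_imp hg'ae) => p _ [].
  split => //.
  apply: (ae_imp hae) => p _ [g0 B1 B2 aB].
  have e : 2^-1 + g' p = Num.sqrt (betaf g a p ^+ 2 + a' p ^+ 2).
    by rewrite /g' addrCA subrr addr0.
  have : (2^-1 + g' p) ^+ 2 = betaf g a p ^+ 2 + a' p ^+ 2.
    by rewrite e sqr_sqrtr // addr_ge0 // sqr_ge0.
  have hb2 : 4^-1 <= betaf g a p ^+ 2 by nra.
  nra.
have H := hopt _ _ _ hdom'.
move: H; rewrite /Ffun /entropy hbeta.
have i1 : integ (fun p => (disp p - mu0) * g p).
  apply: (integ_mulb (M := 12 + `|mu0|)) => //.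
    by apply: measurable_funB; [exact: mdisp | exact: measurable_cst].
  move=> p; have /andP[d0 d12] := disp_bnd p.
  apply: (le_trans (ler_normB _ _)); rewrite ger0_norm //; lra.
have i2 : integ (fun p => disp p * (g' p - g p)).
  apply: (integ_mulb (M := 12)); first exact: mdisp.
    by move=> p; have /andP[d0 d12] := disp_bnd p; rewrite ger0_norm.
  exact: integB.
have hE : tint (fun p => (disp p - mu0) * g' p) = tint (fun p => (disp p - mu0) * g p)
    + tint (fun p => disp p * (g' p - g p)) - mu0 * (tint g' - tint g).
  transitivity (tint (fun p => (disp p - mu0) * g p +
      (disp p * (g' p - g p) - mu0 * (g' p - g p)))).
    by congr tint; apply: funext => p; ring.
  have i3 : integ (fun p => g' p - g p) by apply: integB.
  have i4 : integ (fun p => mu0 * (g' p - g p)) by apply: integZ.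
  have i5 : integ (fun p => disp p * (g' p - g p) - mu0 * (g' p - g p)) by apply: integB.
  rewrite (tintD i1 i5) (tintB i2 i4) (tintZ _ i3) (tintB ig' ig).
  by rewrite addrA.
rewrite hE.
set E := tint (fun p => (disp p - mu0) * g p).
set X := tint (fun p => disp p * (g' p - g p)).
set S := tint _.
set G := tint g; set G' := tint g'; set A := tint a; set A' := tint a'.
move=> H.
rewrite -subr_ge0 in H.
apply: (le_trans H); rewrite le_eqVlt; apply/orP; left; apply/eqP.
by field.
Qed.


Lemma gp_integ (g a : pt -> R) rho0 (hdom : domD g a rho0) (a' : pt -> R) :
  measurable_fun (D : set T3) a' -> integ a' ->
  integ (fun p => Num.sqrt (betaf g a p ^+ 2 + a' p ^+ 2) - 2^-1).
Proof.
move=> ma' ia'.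
have [mg ig ma hae hr0] := dom_facts hdom.
set g' := fun p => _.
have mB : measurable_fun (D : set T3) (betaf g a).
  apply: msqrt; apply: measurable_funB; apply: measurable_funX => //.
  by apply: measurable_funD => //; exact: measurable_cst.
have mg' : measurable_fun (D : set T3) g'.
  apply: measurable_funB; last exact: measurable_cst.
  apply: msqrt; apply: measurable_funD; exact: measurable_funX.
have hg'ae : ae_torus (fun p => 0 <= g' p /\ g' p <= g p + `|a' p| + 2^-1).
  apply: (ae_imp hae) => p _ [g0 B1 B2 aB].
  have := sqrt_bnd (a' p) (le_trans _ B1); rewrite invr_ge0 ler0n => /(_ erefl).
  rewrite /g' => /andP[h1 h2]; split; first by lra.
  have : betaf g a p <= g p + 2^-1.
    have b0 : 0 <= betaf g a p by rewrite /betaf sqrtr_ge0.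
    have ha : 0 <= a p ^+ 2 by rewrite sqr_ge0.
    nra.
  lra.
apply: (integ_le (g := fun p => g p + `|a' p| + 1)) => //.
  apply: integD; last exact: integ_cst.
  by apply: integD => //; exact: integ_abs.
apply: (ae_imp (ae_and hg'ae hae)) => p _ [[h1 h2] [g0 _ _ _]].
rewrite ger0_norm //; lra.
Qed.

Lemma mbeta (g a : pt -> R) rho0 (hdom : domD g a rho0) :
  measurable_fun (D : set T3) (betaf g a).
Proof.
have [mg ig ma hae hr0] := dom_facts hdom.
apply: msqrt; apply: measurable_funB; apply: measurable_funX => //.
by apply: measurable_funD => //; exact: measurable_cst.
Qed.

End P.

Section M.
Set Implicit Arguments. Unset Strict Implicit.
Variable R : realType.

Lemma sq_le (b s : R) : 0 <= b -> 0 <= s -> b ^+ 2 <= s ^+ 2 -> b <= s.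
Proof.
move=> b0 s0 h; case: (leP b s) => // hlt.
have : s ^+ 2 < b ^+ 2 by rewrite ltr_pXn2r // ?nnegrE.
lra.
Qed.

Lemma pw_scale (b s x t : R) : 2^-1 <= b -> 0 <= s -> s ^+ 2 = b ^+ 2 + x ^+ 2 ->
  0 <= t <= 1 ->
  Num.sqrt (b ^+ 2 + (- (t * `|x|)) ^+ 2) <= s /\
  (1 - t) * (s - b) <= s - Num.sqrt (b ^+ 2 + (- (t * `|x|)) ^+ 2).
Proof.
move=> b1 s0 hs /andP[t0 t1].
have x2 : `|x| ^+ 2 = x ^+ 2 by rewrite real_normK ?num_real.
have hx : 0 <= `|x| by [].
set st := Num.sqrt _.
have st0 : 0 <= st by rewrite sqrtr_ge0.
have hst : st ^+ 2 = b ^+ 2 + t ^+ 2 * x ^+ 2.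
  rewrite sqr_sqrtr; first by rewrite sqrrN exprMn x2.
  by rewrite addr_ge0 ?sqr_ge0.
have sb : b <= s by apply: sq_le; [lra|lra|rewrite hs lerDl sqr_ge0].
have stle : st <= s.
  have : t ^+ 2 * x ^+ 2 <= x ^+ 2 by rewrite ler_piMl ?sqr_ge0 // expr_le1.
  move=> h; apply: sq_le => //; rewrite hst hs; lra.
split => //.
have hc : st <= (1 - t) * b + t * s.
  have h1 : 0 <= (1 - t) * b + t * s by nra.
  rewrite -(ger0_norm st0) -(ger0_norm h1) -ler_sqr ?normr_ge0 //.
  rewrite !real_normK ?num_real // hst.
  have : t * (1 - t) * b * s >= t * (1 - t) * b * b.
    have p : 0 <= t * (1 - t) by apply: mulr_ge0; lra.
    by apply: ler_wpM2l; [apply: mulr_ge0 => //; lra | lra].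
  nra.
nra.
Qed.

Lemma pw_min (b s x d : R) : 2^-1 <= b -> 0 <= s -> s ^+ 2 = b ^+ 2 + x ^+ 2 ->
  x <= 0 -> 0 < d ->
  [/\ 0 <= x - Num.min x (- d), x - Num.min x (- d) <= d,
      0 <= Num.sqrt (b ^+ 2 + (Num.min x (- d)) ^+ 2) - s &
      Num.sqrt (b ^+ 2 + (Num.min x (- d)) ^+ 2) - s <= 2 * d * (x - Num.min x (- d))].
Proof.
move=> b1 s0 hs x0 d0.
set y := Num.min x (- d).
have [hy1 hy2] : y <= x /\ (y = x \/ (y = - d /\ - d < x)).
  rewrite /y; case: (leP x (- d)) => h; [by split; [exact: le_refl|left] | split; [lra|right; lra]].
have q0 : 0 <= y ^+ 2 - x ^+ 2 by nra.
have q1 : y ^+ 2 - x ^+ 2 <= 2 * d * (x - y) by case: hy2 => [->|[-> hx]]; nra.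
have q2 : x - y <= d by case: hy2 => [->|[-> hx]]; lra.
set s3 := Num.sqrt _.
have s30 : 0 <= s3 by rewrite sqrtr_ge0.
have hs3 : s3 ^+ 2 = b ^+ 2 + y ^+ 2 by rewrite sqr_sqrtr // addr_ge0 ?sqr_ge0.
have sb : b <= s by apply: sq_le; [lra|lra|rewrite hs lerDl sqr_ge0].
have s3b : b <= s3 by apply: sq_le; [lra|lra|rewrite hs3 lerDl sqr_ge0].
have e : (s3 - s) * (s3 + s) = y ^+ 2 - x ^+ 2 by rewrite -subr_sqr hs3 hs; ring.
have h1 : 0 <= s3 - s by nra.
split => //; first by lra.
nra.
Qed.


Lemma real3a (U r N d0 d x : R) : 0 < U -> 0 < r -> r <= N -> 0 < d0 ->
  (1 - r / (d0 + N)) * d0 <= d ->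
  0 <= U / 2 * ((r + d - r / (d0 + N) * N) ^+ 2 - x ^+ 2) - U * ((r + d) ^+ 2 - r ^+ 2) ->
  False.
Proof.
move=> hU hr hN hd0 hd hK.
have k0 : 0 < d0 + N by lra.
set t := r / (d0 + N) in hd hK *.
have tk : t * (d0 + N) = r by rewrite /t divfK // gt_eqF.
have t0 : 0 < t by rewrite /t divr_gt0.
have t1 : t <= 1 by rewrite /t ler_pdivrMr // mul1r; lra.
have a0 : r - t * N = t * d0 by rewrite -{1}tk; ring.
have hd' : 0 <= d.
  have : 0 <= (1 - t) * d0 by apply: mulr_ge0; lra.
  lra.
have h1 : 0 <= (t * d0) ^+ 2 - 2 * r * d.
  have : 0 <= (r + d - t * N) ^+ 2 - x ^+ 2 - 2 * ((r + d) ^+ 2 - r ^+ 2).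
    have : 0 <= U / 2 * ((r + d - t * N) ^+ 2 - x ^+ 2 - 2 * ((r + d) ^+ 2 - r ^+ 2)).
      by move: hK; congr (_ <= _); field.
    by rewrite pmulr_rge0 // divr_gt0.
  have : r + d - t * N = t * d0 + d by lra.
  move=> ->.
  have : t * d0 * d <= r * d.
    apply: ler_wpM2r => //; have : 0 <= t * N by apply: mulr_ge0; lra.
    lra.
  have := sqr_ge0 x; have := sqr_ge0 d; nra.
have h2 : t * d0 ^+ 2 <= r * d.
  have : t * d0 <= (1 - t) * r by nra.
  nra.
have p : 0 < t * d0 ^+ 2 by rewrite mulr_gt0 // exprn_gt0.
have : t * (t * d0 ^+ 2) <= 1 * (t * d0 ^+ 2) by apply: ler_wpM2r => //; exact: ltW.
have : (t * d0) ^+ 2 = t * (t * d0 ^+ 2) by ring.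
lra.
Qed.

Lemma real3c (U r x w e X d : R) : 0 < U -> 0 < x -> 0 < r -> 0 <= w -> w <= d ->
  0 <= e -> e <= 2 * d * w -> X <= 12 * e -> 0 < d -> d <= 1 -> 3 * d <= x ->
  d * (24 + 4 * U * r) < U * x / 2 ->
  0 <= X + U / 2 * ((x - w - e) ^+ 2 - x ^+ 2) - U * ((r - e) ^+ 2 - r ^+ 2) ->
  w <= 0.
Proof.
move=> hU hx hr w0 wd e0 ew hX d0 d1 dx hd hK.
have e2 : e <= 2 * d by nra.
have hwe : w + e <= x by lra.
have q1 : w * x <= (w + e) * (2 * x - w - e) by nra.
have q2 : 0 <= 12 * e - U / 2 * ((w + e) * (2 * x - w - e)) + U * (2 * r * e - e ^+ 2).
  have : X + U / 2 * ((x - w - e) ^+ 2 - x ^+ 2) - U * ((r - e) ^+ 2 - r ^+ 2) =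
         X - U / 2 * ((w + e) * (2 * x - w - e)) + U * (2 * r * e - e ^+ 2) by field.
  lra.
have q3 : U / 2 * (w * x) <= U / 2 * ((w + e) * (2 * x - w - e)).
  by apply: ler_wpM2l => //; rewrite divr_ge0 // ltW.
have q4 : U * (2 * r * e - e ^+ 2) <= U * (2 * r * (2 * d * w)).
  apply: ler_wpM2l; first exact: ltW.
  have := sqr_ge0 e; nra.
have q5 : 0 <= w * (d * (24 + 4 * U * r) - U * x / 2).
  have -> : w * (d * (24 + 4 * U * r) - U * x / 2) =
    12 * (2 * d * w) - U / 2 * (w * x) + U * (2 * r * (2 * d * w)) by field.
  have : 12 * e <= 12 * (2 * d * w) by lra.
  lra.
have hc : d * (24 + 4 * U * r) - U * x / 2 < 0 by lra.
case: (leP w 0) => // hw.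
have : w * (d * (24 + 4 * U * r) - U * x / 2) < 0 by rewrite pmulr_rlt0.
lra.
Qed.

End M.

Section Main.
Set Implicit Arguments. Unset Strict Implicit.
Variable R : realType.
Local Notation mu := (@leb3 R).
Local Notation D := (@torus R).
Local Notation pt := (pt R).
Local Notation T3 := (T3 R).

Lemma main_thm U mu0 T (g a : pt -> R) rho0 : 0 < U -> is_minimizer U mu0 T g a rho0 ->
  ((ae_torus (fun p => a p = 0)) <-> rho0 = 0) /\
  (0 < rho0 -> ae_torus (fun p => a p < 0) /\ tint (fun p => `|a p|) < rho0).
Proof.
move=> hU hmin.
have hdom := hmin.1.
have [mg ig ma hae hr0] := dom_facts hdom.
have mB := mbeta hdom.
have hS : ae_torus (fun p => [/\ 2^-1 <= betaf g a p, 0 <= g p + 2^-1,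
   (g p + 2^-1) ^+ 2 = betaf g a p ^+ 2 + a p ^+ 2 & betaf g a p <= g p + 2^-1]).
  apply: (ae_imp hae) => p _ [g0 B1 B2 aB].
  have e : (g p + 2^-1) ^+ 2 = betaf g a p ^+ 2 + a p ^+ 2 by rewrite B2; ring.
  split => //; first lra.
  apply: sq_le; [lra|lra|rewrite e lerDl sqr_ge0 //].
have ia : integ a.
  apply: (integ_le (g := fun p => g p + 2^-1)) => //.
    exact: integD ig (integ_cst _).
  by apply: (ae_imp hae) => p _ [].
have iabs := integ_abs ia.
set N := tint (fun p => `|a p|).
set A := tint a.
have hAN : - N <= A.
  rewrite -tintN //; apply: tint_le => //; first exact: integN.
  by apply: aeT => p _; have := ler_norm (- a p); rewrite normrN; lra.
have hN0 : 0 <= N by apply: tint_ge0 => //; apply: aeT.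
have iB : integ (betaf g a).
  apply: (integ_le (g := fun p => g p + 2^-1)) => //.
    exact: integD ig (integ_cst _).
  apply: (ae_imp hS) => p _ [B1 _ _ B2]; rewrite ger0_norm //; lra.
have id0 : integ (fun p => g p + 2^-1 - betaf g a p).
  by apply: integB => //; apply: integD ig (integ_cst _).
set d0 := tint (fun p => g p + 2^-1 - betaf g a p).
have hd0pos : 0 <= d0.
  by apply: tint_ge0 => //; apply: (ae_imp hS) => p _ [_ _ _ h]; lra.
have hd0z : d0 <= 0 -> ae_torus (fun p => a p = 0).
  move=> h; have := tint_eq0 id0 _ h.
  have h' : ae_torus (fun p => 0 <= g p + 2^-1 - betaf g a p).
    by apply: (ae_imp hS) => p _ [_ _ _ h1]; lra.
  move=> /(_ h') hz.
  apply: (ae_imp (ae_and hz hS)) => p _ [hz1 [_ _ e _]].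
  have eB : g p + 2^-1 = betaf g a p by lra.
  rewrite eB in e.
  have : a p ^+ 2 = 0 by lra.
  by move/eqP; rewrite sqrf_eq0 => /eqP.
have scale : forall t, 0 <= t <= 1 -> exists d, (1 - t) * d0 <= d /\
   0 <= U / 2 * ((rho0 + d - t * N) ^+ 2 - (A + rho0) ^+ 2) - U * ((rho0 + d) ^+ 2 - rho0 ^+ 2).
  move=> t ht.
  pose a' := fun p => - (t * `|a p|).
  have ma' : measurable_fun (D : set T3) a'.
    apply: measurable_funN; apply: measurable_funM; first exact: measurable_cst.
    by apply: measurableT_comp.
  have ia' : integ a' by apply: integN; apply: integZ.
  have ig' := gp_integ hdom ma' ia'.
  set g' := (fun p => Num.sqrt (betaf g a p ^+ 2 + a' p ^+ 2) - 2^-1) in ig'.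
  have hpw : ae_torus (fun p => g' p <= g p /\ (1 - t) * (g p + 2^-1 - betaf g a p) <= g p - g' p).
    apply: (ae_imp hS) => p _ [B1 s0 hs _].
    have [h1 h2] := pw_scale B1 s0 hs ht.
    rewrite /g' /a'; split; lra.
  have hGG : tint g' <= tint g.
    by apply: tint_le => //; apply: (ae_imp hpw) => p _ [].
  exists (tint g - tint g').
  split.
    rewrite -tintB // -tintZ //; apply: tint_le => //; first exact: integZ.
      exact: integB.
    by apply: (ae_imp hpw) => p _ [].
  have hr' : 0 <= rho0 - (tint g' - tint g) by lra.
  have K := pert hmin ma' ia' hr'.
  have hX : tint (fun p => disp p * (g' p - g p)) <= 0.
    rewrite -(tint_cst 0); apply: tint_le; last first.
    - apply: (ae_imp hpw) => p _ [h1 _]; apply: mulr_ge0_le0.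
        by have /andP[] := disp_bnd p.
      lra.
    - exact: integ_cst.
    - apply: (integ_mulb (M := 12)); first exact: mdisp.
        by move=> p; have /andP[d0' d12] := disp_bnd p; rewrite ger0_norm.
      exact: integB.
  have hA' : tint a' = - (t * N) by rewrite /a' tintN ?tintZ //; apply: integZ.
  rewrite hA' in K.
  move: K hX.
  set X := tint _.
  set G := tint g; set G' := tint g'.
  move=> K hX.
  rewrite -/A in K. lra.
have h3 : 0 < rho0 -> ae_torus (fun p => a p < 0) /\ N < rho0.
  move=> hr.
  have hNr : N < rho0.
    rewrite ltNge; apply/negP => hN.
    have hd0p : 0 < d0.
      rewrite lt_neqAle hd0pos andbT; apply/eqP => hd00.
      have az : ae_torus (fun p => a p = 0) by apply: hd0z; rewrite hd00.
      have : N <= 0.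
        rewrite -(tint_cst 0); apply: tint_le => //; first exact: integ_cst.
        by apply: (ae_imp az) => p _ ->; rewrite normr0.
      lra.
    have ht : 0 <= rho0 / (d0 + N) <= 1.
      apply/andP; split; first by rewrite divr_ge0 //; lra.
      by rewrite ler_pdivrMr ?mul1r; lra.
    have [d [hd hK]] := scale _ ht.
    exact: real3a hU hr hN hd0p hd hK.
  have [d [hd hK]] := scale 1 (ltac:(apply/andP; split; lra)).
  have hd' : 0 <= d by lra.
  have hsq : (A + rho0) ^+ 2 <= (rho0 - N) ^+ 2.
    have : 0 <= (rho0 + d - 1 * N) ^+ 2 - (A + rho0) ^+ 2 - 2 * ((rho0 + d) ^+ 2 - rho0 ^+ 2).
      have : 0 <= U / 2 * ((rho0 + d - 1 * N) ^+ 2 - (A + rho0) ^+ 2 - 2 * ((rho0 + d) ^+ 2 - rho0 ^+ 2)).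
        by move: hK; congr (_ <= _); field.
      by rewrite pmulr_rge0 // divr_gt0.
    have : 0 <= N * d by apply: mulr_ge0.
    have := sqr_ge0 d; nra.
  have hx : A + rho0 <= rho0 - N.
    case: (leP (A + rho0) 0) => h; first lra.
    apply: sq_le => //; [exact: ltW | lra].
  have hA : A = - N by lra.
  have aneg : ae_torus (fun p => a p <= 0).
    have i2 : integ (fun p => a p + `|a p|) by apply: integD.
    have h0 : ae_torus (fun p => 0 <= a p + `|a p|).
      by apply: aeT => p _; have := ler_norm (- a p); rewrite normrN; lra.
    have := tint_eq0 i2 h0; rewrite tintD // -/A -/N hA addNr lexx => /(_ isT) hz.
    by apply: (ae_imp hz) => p _ h; have := normr_ge0 (a p); lra.
  set x := A + rho0.
  have hx0 : 0 < x by rewrite /x hA; lra.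
  have c0 : 0 < 24 + 4 * U * rho0.
    have : 0 <= U * rho0 by apply: mulr_ge0; lra.
    lra.
  pose dl := Num.min (Num.min 1 (rho0 / 2)) (Num.min (x / 3) (U * x / (4 * (24 + 4 * U * rho0)))).
  have dl0 : 0 < dl.
    rewrite /dl !lt_min; apply/andP; split; apply/andP; split => //.
    - by rewrite divr_gt0.
    - by rewrite divr_gt0.
    - by rewrite divr_gt0 ?mulr_gt0.
  have := le_refl dl; rewrite {2}/dl !le_min => /andP[/andP[dl1 dl2] /andP[dl3 dl4]].
  have dlx : 3 * dl <= x by move: dl3; rewrite ler_pdivlMr //; lra.
  have dlc : dl * (24 + 4 * U * rho0) < U * x / 2.
    move: dl4; rewrite ler_pdivlMr ?mulr_gt0 // => h.
    have : 0 < U * x by rewrite mulr_gt0.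
    lra.
  pose a3 := fun p => Num.min (a p) (- dl).
  have ma3 : measurable_fun (D : set T3) a3.
    by apply: measurable_minr => //; exact: measurable_cst.
  have ia3 : integ a3.
    apply: (integ_le (g := fun p => `|a p| + dl)) => //.
      by apply: integD => //; exact: integ_cst.
    apply: aeT => p _; rewrite /a3.
    case: (leP (a p) (- dl)) => h; first by have := normr_ge0 (a p); lra.
    rewrite normrN ger0_norm; [have := normr_ge0 (a p); lra | lra].
  have ig3 := gp_integ hdom ma3 ia3.
  set g3 := (fun p => Num.sqrt (betaf g a p ^+ 2 + a3 p ^+ 2) - 2^-1) in ig3.
  have hpw : ae_torus (fun p => [/\ 0 <= a p - a3 p, a p - a3 p <= dl,
      0 <= g3 p - g p & g3 p - g p <= 2 * dl * (a p - a3 p)]).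
    apply: (ae_imp (ae_and hS aneg)) => p _ [[B1 s0 hs _] an].
    have [h1 h2 h3 h4] := pw_min B1 s0 hs an dl0.
    rewrite /g3 /a3; split; lra.
  have iw : integ (fun p => a p - a3 p) by apply: integB.
  have ie : integ (fun p => g3 p - g p) by apply: integB.
  set w := tint (fun p => a p - a3 p).
  set e := tint g3 - tint g.
  have he : e = tint (fun p => g3 p - g p) by rewrite tintB.
  have w0 : 0 <= w by apply: tint_ge0 => //; apply: (ae_imp hpw) => p _ [].
  have wd : w <= dl.
    rewrite -(tint_cst dl); apply: tint_le => //; first exact: integ_cst.
    by apply: (ae_imp hpw) => p _ [].
  have e0 : 0 <= e by rewrite he; apply: tint_ge0 => //; apply: (ae_imp hpw) => p _ [].
  have ew : e <= 2 * dl * w.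
    rewrite he -tintZ //; apply: tint_le => //; first exact: integZ.
    by apply: (ae_imp hpw) => p _ [].
  have hX : tint (fun p => disp p * (g3 p - g p)) <= 12 * e.
    rewrite he -tintZ //; apply: tint_le => //; last first.
    - apply: (ae_imp hpw) => p _ [_ _ h _]; apply: ler_wpM2r => //.
      by have /andP[] := disp_bnd p.
    - exact: integZ.
    - apply: (integ_mulb (M := 12)); first exact: mdisp.
        by move=> p; have /andP[d0' d12] := disp_bnd p; rewrite ger0_norm.
      exact: ie.
  have hr' : 0 <= rho0 - (tint g3 - tint g).
    rewrite -/e; have : 2 * dl * w <= 2 * dl * dl by apply: ler_wpM2l => //; rewrite mulr_ge0 // ltW.
    have : dl * dl <= dl * 1 by apply: ler_wpM2l => //; exact: ltW.
    lra.
  have K := pert hmin ma3 ia3 hr'.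
  have hA3 : tint a3 = A - w by rewrite /w (tintB ia ia3) /A; ring.
  rewrite hA3 in K. rewrite -/A in K. rewrite -/e in K.
  have hw : w <= 0.
    apply: (real3c hU hx0 hr w0 wd e0 ew hX dl0 dl1 dlx dlc).
    by move: K; rewrite /x; congr (_ <= _); field.
  have hz := tint_eq0 iw (ae_imp hpw (fun p _ h => let: And4 h1 _ _ _ := h in h1)) hw.
  split => //.
  apply: (ae_imp hz) => p _ h.
  have : a3 p <= - dl by rewrite /a3 ge_min lexx orbT.
  lra.
split; last exact: h3.
split.
- move=> az.
  case: (ltrgtP rho0 0) => // hr; first lra.
  have [aneg _] := h3 hr.
  have : tint (fun _ : pt => 1) <= tint (fun _ : pt => 0 : R).
    apply: tint_le; [exact: integ_cst | exact: integ_cst |].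
    by apply: (ae_imp (ae_and az aneg)) => p _ [h1 h2]; lra.
  by rewrite !tint_cst; lra.
- move=> r0.
  have [d [hd hK]] := scale 0 (ltac:(apply/andP; split; lra)).
  apply: hd0z.
  rewrite r0 in hK.
  have : 0 <= (0 + d - 0 * N) ^+ 2 - (A + 0) ^+ 2 - 2 * ((0 + d) ^+ 2 - 0 ^+ 2).
    have : 0 <= U / 2 * ((0 + d - 0 * N) ^+ 2 - (A + 0) ^+ 2 - 2 * ((0 + d) ^+ 2 - 0 ^+ 2)).
      by move: hK; congr (_ <= _); field.
    by rewrite pmulr_rge0 // divr_gt0.
  have := sqr_ge0 A; have := sqr_ge0 d; move=> h1 h2 h5.
  have : d ^+ 2 <= 0 by lra.

  move=> h4; have : d = 0.
    by apply/eqP; rewrite -sqrf_eq0 eq_le h4 sqr_ge0.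
  lra.
Qed.
End Main.

Theorem proposition4p1 (R : realType) (U mu T : R) (g a : pt R -> R) (rho0 : R) :
  0 < U -> 0 <= T -> is_minimizer U mu T g a rho0 ->
  ((ae_torus (fun p => a p = 0)) <-> rho0 = 0) /\
  (0 < rho0 ->
     ae_torus (fun p => a p < 0) /\ tint (fun p => `|a p|) < rho0).
Proof.
move=> hU _ hmin; exact: main_thm hU hmin.
Qed.
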